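(* Let $F$ be a field of characteristic $0$ and let $b_1,\dots,b_n$ be indeterminates. Then in the field $F(b_1,\dots,b_n)$ of rational functions, \[\sum_{\sigma\in S_n}\frac{\operatorname{sgn}(\sigma)}{b_{\sigma(1)}(b_{\sigma(1)}+b_{\sigma(2)})\cdots(b_{\sigma(1)}+\cdots+b_{\sigma(n)})}=2^n\frac{\prod_{1\le i<j\le n}(b_j-b_i)}{\prod_{1\le i\le j\le n}(b_i+b_j)},\] where $S_n$ is the symmetric group on $n$ letters. *)

(* Defs.v *)
From HB Require Import structures.
From mathcomp Require Import all_boot all_order all_algebra all_fingroup.
From mathcomp Require Import fraction.
From mathcomp Require Import mpoly.
Set Implicit Arguments. Unset Strict Implicit. Unset Printing Implicit Defensive.
Import GRing.Theory.
Local Open Scope ring_scope.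

(* The field of rational functions F(b_1,...,b_n): the fraction field of the
   multivariate polynomial ring F[b_1,...,b_n] (indices shifted to 0..n-1). *)
Definition ratfun (F : fieldType) (n : nat) := {fraction {mpoly F[n]}}.

Definition bvar (F : fieldType) (n : nat) (i : 'I_n) : ratfun F n :=
  tofrac ('X_i : {mpoly F[n]}).

(* Main.v *)
Require Import Defs.
From HB Require Import structures.
From mathcomp Require Import all_boot all_order all_algebra all_fingroup.
From mathcomp Require Import fraction.
From mathcomp Require Import mpoly.
From mathcomp Require Import zify ring.
Set Implicit Arguments. Unset Strict Implicit. Unset Printing Implicit Defensive.
Import GRing.Theory.
Local Open Scope ring_scope.
Lemma lift_lt n (m : 'I_n.+1) (i j : 'I_n) : (lift m i < lift m j)%N = (i < j)%N.
Proof. rewrite /= /bump; case: (leqP m i); case: (leqP m j); lia. Qed.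
Lemma lift_le n (m : 'I_n.+1) (i j : 'I_n) : (lift m i <= lift m j)%N = (i <= j)%N.
Proof. rewrite /= /bump; case: (leqP m i); case: (leqP m j); lia. Qed.

Lemma lift_gt n (m : 'I_n.+1) (i : 'I_n) : (m < lift m i)%N = (m <= i)%N.
Proof. rewrite /= /bump; case: (leqP m i); lia. Qed.
Lemma lift_ge n (m : 'I_n.+1) (i : 'I_n) : (m <= lift m i)%N = (m <= i)%N.
Proof. rewrite /= /bump; case: (leqP m i); lia. Qed.
Lemma lift_lt' n (m : 'I_n.+1) (i : 'I_n) : (lift m i < m)%N = (i < m)%N.
Proof. rewrite /= /bump; case: (leqP m i); lia. Qed.
Lemma lift_le' n (m : 'I_n.+1) (i : 'I_n) : (lift m i <= m)%N = (i < m)%N.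
Proof. rewrite /= /bump; case: (leqP m i); lia. Qed.

Section Gen.
Variable K : fieldType.

Lemma prod_pairs n (f : 'I_n.+1 -> 'I_n.+1 -> K) (r : nat -> nat -> bool)
  (hr : forall (m : 'I_n.+1) (i j : 'I_n), r (lift m i) (lift m j) = r i j) (m : 'I_n.+1) :
 \prod_(i < n.+1) \prod_(j < n.+1 | r i j) f i j =
 (\prod_(j < n.+1 | r m j) f m j) * (\prod_(i < n | r (lift m i) m) f (lift m i) m) *
   \prod_(i<n) \prod_(j<n | r i j) f (lift m i) (lift m j).
Proof.
rewrite (bigD1_ord m) //= -mulrA; congr (_ * _).
rewrite (big_mkcond (fun i => r (lift m i) m)) -big_split /=.
apply: eq_bigr => i _.
rewrite big_mkcond (bigD1_ord m) //=; congr (_ * _).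
by rewrite [RHS]big_mkcond; apply: eq_bigr => j _; rewrite hr.
Qed.
Lemma size_prodX n (a : 'I_n -> K) : size (\prod_(i < n) ('X - (a i)%:P)) = n.+1.
Proof. by rewrite size_prod_XsubC -[in RHS](card_ord n) cardT enumT. Qed.

Lemma coef_prodX_top n (a : 'I_n -> K) : (\prod_(i < n) ('X - (a i)%:P))`_n = 1.
Proof.
have := monic_prod_XsubC (index_enum 'I_n) predT a.
by move/monicP; rewrite lead_coefE size_prodX.
Qed.

Lemma coef_prodX n (a : 'I_n.+1 -> K) :
  (\prod_(i < n.+1) ('X - (a i)%:P))`_n = - \sum_(i < n.+1) a i.
Proof.
elim: n a => [|n IH] a.
  rewrite big_ord1 coefB coefX coefC big_ord1 /=. by rewrite sub0r.
rewrite big_ord_recr /= mulrBr coefB coefMX /= IH mulrC coefCM coef_prodX_top.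
by rewrite [in RHS]big_ord_recr /= opprD mulr1.
Qed.

Lemma lagr n (x : 'I_n.+1 -> K) (p : {poly K}) : injective x -> (size p <= n.+1)%N ->
  \sum_(m < n.+1) p.[x m] / \prod_(i < n) (x m - x (lift m i)) = p`_n.
Proof.
move=> xinj sp.
pose L (m : 'I_n.+1) := \prod_(i < n) ('X - (x (lift m i))%:P).
have dnz m : \prod_(i < n) (x m - x (lift m i)) != 0.
  apply/prodf_neq0 => i _; rewrite subr_eq0; apply/eqP => /xinj /eqP.
  by rewrite eq_liftF.
have Lx m k : (L m).[x k] = if m == k then \prod_(i < n) (x m - x (lift m i)) else 0.
  rewrite /L horner_prod; case: eqP => [->|/eqP nmk].
    by apply: eq_bigr => i _; rewrite hornerXsubC.
  have [k' ->] : exists k', k = lift m k'.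
    by case: (unliftP m k) => [k' ->|eqk]; [exists k'|by rewrite eqk eqxx in nmk].
  by rewrite (bigD1 k') //= hornerXsubC subrr mul0r.
pose q := \sum_(m < n.+1) (p.[x m] / \prod_(i < n) (x m - x (lift m i))) *: L m.
have pq : p = q.
  apply/eqP; rewrite -subr_eq0; apply/eqP.
  apply: (@roots_geq_poly_eq0 _ _ [seq x i | i <- enum 'I_n.+1]).
  - apply/allP => _ /mapP [k _ ->]; rewrite /root hornerD hornerN /q horner_sum.
    rewrite (bigD1 k) //= [X in _ - (_ + X)]big1 ?addr0.
      by rewrite hornerZ (Lx k k) eqxx divfK // subrr.
    by move=> m /negPf nmk; rewrite hornerZ (Lx m k) nmk mulr0.
  - by rewrite map_inj_uniq ?enum_uniq.
  - rewrite size_map size_enum_ord.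
    apply: leq_trans (size_polyD _ _) _; rewrite size_polyN geq_max sp /=.
    rewrite /q; apply: (big_ind (fun r : {poly K} => size r <= n.+1)%N).
    - by rewrite size_poly0.
    - by move=> a b ha hb; apply: leq_trans (size_polyD _ _) _; rewrite geq_max ha.
    move=> m _; apply: leq_trans (size_scale_leq _ _) _.
    by rewrite /L size_prodX.
rewrite [in RHS]pq /q coef_sum; apply: eq_bigr => m _.
by rewrite coefZ /L coef_prodX_top mulr1.
Qed.


Lemma key n (x : 'I_n.+1 -> K) : injective x ->
 \sum_(m < n.+1) (\prod_(j < n.+1) (x m + x j)) / \prod_(i < n) (x m - x (lift m i))
   = 2%:R * \sum_(i<n.+1) x i.
Proof.
move=> xinj.
pose r := \prod_(j < n.+1) ('X - (- x j)%:P) - \prod_(j < n.+1) ('X - (x j)%:P).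
have rx m : r.[x m] = \prod_(j < n.+1) (x m + x j).
  rewrite /r hornerD hornerN !horner_prod.
  rewrite [X in _ - X](bigD1 m) //= hornerXsubC subrr mul0r subr0.
  by apply: eq_bigr => j _; rewrite hornerXsubC opprK.
have sr : (size r <= n.+1)%N.
  apply/leq_sizeP => j hj; rewrite /r coefB.
  case: (ltngtP j n.+1) hj => // [hj|->] _.
    by rewrite !nth_default ?subrr ?size_prodX.
  by rewrite !coef_prodX_top subrr.
rewrite (eq_bigr (fun m => r.[x m] / \prod_(i < n) (x m - x (lift m i)))); last first.
  by move=> m _; rewrite rx.
rewrite lagr // /r coefB !coef_prodX sumrN opprK mulr2n mulrDl mul1r.
by []. Qed.
Definition LHSf n (x : 'I_n -> K) := \sum_(s : 'S_n) (-1) ^+ odd_perm s /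
       \prod_(k < n) (\sum_(i < n | (i <= k)%N) x (s i)).

Lemma lhs_rec n (x : 'I_n.+1 -> K) :
 LHSf x = (\sum_i x i)^-1 * \sum_(m < n.+1) (-1)^+(n - m) * LHSf (fun i => x (lift m i)).
Proof.
rewrite /LHSf (partition_big (fun s : 'S_n.+1 => s ord_max) predT) //=.
rewrite big_distrr /=; apply: eq_bigr => m _.
rewrite (reindex (lift_perm ord_max m)); last first.
  pose ulsf i (s : 'S_n.+1) k := odflt k (unlift (s i) (s (lift i k))).
  have ulsfK i (s : 'S_n.+1) k: lift (s i) (ulsf i s k) = s (lift i k).
    rewrite /ulsf; have:= neq_lift i k.
    by rewrite -(can_eq (permK s)) => /unlift_some[] ? ? ->.
  have inj_ulsf: injective (ulsf ord_max _).
    move=> s; apply: can_inj (ulsf (s ord_max) s^-1%g) _ => k'.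
    by rewrite {1}/ulsf ulsfK !permK liftK.
  exists (fun s => perm (inj_ulsf s)) => [s _ | s].
    by apply/permP=> k'; rewrite permE /ulsf lift_perm_lift lift_perm_id liftK.
  move/(s _ =P _) => si0; apply/permP=> k.
  case: (unliftP ord_max k) => [k'|] ->; rewrite ?lift_perm_id //.
  by rewrite lift_perm_lift -si0 permE ulsfK.
rewrite mulrCA big_distrr /= mulrC big_distrl /=.
rewrite (eq_bigl predT); last by move=> s; rewrite lift_perm_id eqxx.
apply: eq_bigr => s _.
rewrite odd_lift_perm big_ord_recr /=.
have -> : \sum_(i < n.+1 | (i <= @ord_max n)%N) x (lift_perm ord_max m s i) = \sum_i x i.
  rewrite [LHS](eq_bigl predT); last by move=> i; exact: (leq_ord i).
  by rewrite [RHS](reindex_inj (@perm_inj _ (lift_perm ord_max m s))).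
have E : forall k : 'I_n, \sum_(i < n.+1 | (i <= k)%N)
      x (lift_perm ord_max m s i) = \sum_(i < n | (i <= k)%N) x (lift m (s i)).
  move=> k; rewrite big_mkcond big_ord_recr /= leqNgt ltn_ord /= addr0.
  rewrite [RHS]big_mkcond; apply: eq_bigr => i _.
  have -> : widen_ord (leqnSn n) i = lift ord_max i by apply: val_inj; rewrite /= /bump leqNgt ltn_ord.
  by rewrite lift_perm_lift.
rewrite (eq_bigr _ (fun k _ => E k)).
rewrite invfM.
have sg : (-1) ^+ (n - m) = (-1) ^+ (odd n (+) odd m) :> K.
  by rewrite -oddB ?signr_odd // -ltnS ltn_ord.
rewrite sg signr_addb.
set A := \prod_(i < n) _. set S := \sum_(i < n.+1) x i.
set a := (-1) ^+ _. set b := (-1) ^+ _.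
clearbody A S a b; ring.
Qed.

Lemma prod_sign n (m : nat) (c : K) :
  \prod_(i < n) (if (m <= i)%N then c else 1) = c ^+ (n - m).
Proof.
elim: n => [|n IH]; first by rewrite big_ord0 sub0n expr0.
rewrite big_ord_recr /= IH; case: leqP => h.
  by rewrite -exprSr subSn.
by rewrite mulr1; congr (_ ^+ _); lia.
Qed.

Definition Vf n (x : 'I_n -> K) := \prod_(i < n) \prod_(j < n | (i < j)%N) (x j - x i).
Definition Pf n (x : 'I_n -> K) := \prod_(i < n) \prod_(j < n | (i <= j)%N) (x i + x j).

Lemma Vrec n (x : 'I_n.+1 -> K) (m : 'I_n.+1) : Vf x =
  (-1)^+(n - m) * \prod_(i < n) (x m - x (lift m i)) * Vf (fun i => x (lift m i)).
Proof.
rewrite /Vf (@prod_pairs n (fun i j => x j - x i) (fun a b => (a < b)%N) _ m); last first.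
  by move=> m' i j; rewrite lift_lt.
congr (_ * _).
rewrite big_mkcond (bigD1_ord m) //= ltnn mul1r.
rewrite [X in _ * X]big_mkcond -big_split -prod_sign -big_split /=.
apply: eq_bigr => i _; rewrite lift_gt lift_lt'.
case: leqP => h; first by rewrite mulr1 mulN1r opprB.
by [].
Qed.

Lemma Prec n (x : 'I_n.+1 -> K) (m : 'I_n.+1) : Pf x =
  \prod_(j < n.+1) (x m + x j) * Pf (fun i => x (lift m i)).
Proof.
rewrite /Pf (@prod_pairs n (fun i j => x i + x j) (fun a b => (a <= b)%N) _ m); last first.
  by move=> m' i j; rewrite lift_le.
congr (_ * _).
rewrite big_mkcond (bigD1_ord m) //= leqnn (bigD1_ord m) //= -mulrA; congr (_ * _).
rewrite [X in _ * X]big_mkcond -big_split /=.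
apply: eq_bigr => i _; rewrite lift_ge lift_le'.
case: leqP => h; first by rewrite mulr1.
by rewrite mul1r addrC.
Qed.

Lemma G n (x : 'I_n -> K) : injective x -> (forall i j, x i + x j != 0) ->
  (forall A : {set 'I_n}, A != set0 -> \sum_(i in A) x i != 0) ->
  LHSf x = 2%:R ^+ n * Vf x / Pf x.
Proof.
elim: n x => [|n IH] x xinj x2 xA.
  rewrite /LHSf /Vf /Pf !big_ord0 expr0 mul1r divr1.
  rewrite (eq_bigr (fun _ => 1)); last first.
    move=> s _; have -> : s = 1%g by apply/permP => -[].
    by rewrite odd_perm1 big_ord0 expr0 divr1.
  by rewrite sumr_const card_Sn.
have Pnz : forall k (y : 'I_k -> K), (forall i j, y i + y j != 0) -> Pf y != 0.
  by move=> k y hy; apply/prodf_neq0 => i _; apply/prodf_neq0 => j _.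
set S := \sum_(i < n.+1) x i.
have Snz : S != 0.
  have := xA setT; rewrite (eq_bigl predT); last by move=> i; rewrite inE.
  apply.
  by apply/set0Pn; exists ord0; rewrite inE.
rewrite lhs_rec.
rewrite [X in _^-1 * X](eq_bigr (fun m : 'I_n.+1 => (2%:R ^+ n * Vf x / Pf x) *
     ((\prod_(j < n.+1) (x m + x j)) / \prod_(i < n) (x m - x (lift m i))))); last first.
  move=> m _.
  rewrite IH; first last.
  - move=> A' hA'; have := xA (lift m @: A').
    rewrite big_imset /=; last by move=> i j _ _; apply: lift_inj.
    by apply; rewrite imset_eq0.
  - by [].
  - by move=> i j /xinj /lift_inj.
  have dnz : \prod_(i < n) (x m - x (lift m i)) != 0.
    apply/prodf_neq0 => i _; rewrite subr_eq0; apply/eqP => /xinj /eqP.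
    by rewrite eq_liftF.
  have Qnz : \prod_(j < n.+1) (x m + x j) != 0 by apply/prodf_neq0.
  have Pmnz := Pnz _ (fun i => x (lift m i)) (fun i j => x2 _ _).
  rewrite (Vrec x m) (Prec x m).
  move: dnz Qnz Pmnz.
  set d := \prod_(i < n) _. set Q := \prod_(j < n.+1) _.
  set Vm := Vf _. set Pm := Pf _. set sg := (-1) ^+ _.
  clearbody d Q Vm Pm sg => dnz Qnz Pmnz.
  field.
  by rewrite dnz Qnz Pmnz.
rewrite -big_distrr /= key //.
move: Snz (Pnz _ x x2); rewrite /S.
set S' := \sum_(i < n.+1) x i. set V := Vf x. set P := Pf x.
clearbody S' V P => Snz Pnz'.
rewrite exprS. field.
by rewrite Snz Pnz'.
Qed.

End Gen.

Theorem lemmaA5 (F : fieldType) (n : nat) (charF0 : [pchar F] =i pred0) :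
  \sum_(s : 'S_n)
     (-1) ^+ odd_perm s /
       \prod_(k < n) (\sum_(i < n | (i <= k)%N) bvar F (s i))
  = 2%:R ^+ n *
      (\prod_(i < n) \prod_(j < n | (i < j)%N) (bvar F j - bvar F i)) /
      (\prod_(i < n) \prod_(j < n | (i <= j)%N) (bvar F i + bvar F j)).
Proof.
have cF := charF0; move/pcharf0P in cF.
have := @G (ratfun F n) n (@bvar F n); rewrite /LHSf /Vf /Pf; apply.
- move=> i j; rewrite /bvar => /eqP; rewrite tofrac_eq => /eqP h.
  have := congr1 (meval (fun k => (k == i)%:R)) h; rewrite !mevalXU eqxx.
  by case: eqP => // _ /eqP; rewrite oner_eq0.
- move=> i j; rewrite /bvar -rmorphD tofrac_eq0; apply/negP => /eqP h.
  have := congr1 (meval (fun _ => 1)) h; rewrite mevalD !mevalXU raddf0 => /eqP.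
  by rewrite -mulr2n -[_ *+ 2]/(2%:R) cF.
- move=> A hA; rewrite /bvar -rmorph_sum tofrac_eq0; apply/negP => /eqP h.
  have := congr1 (meval (fun _ => 1)) h; rewrite raddf_sum raddf0 => /eqP.
  rewrite (eq_bigr (fun _ => 1)); last by move=> i _; apply: mevalXU.
  rewrite sumr_const cF cards_eq0 => /eqP hA0.
  by rewrite hA0 eqxx in hA.
Qed.
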